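(* Let $k$ be a positive integer, $a\ge k+2$ an integer and $G=K_a\,\square\,K_a$. Then $\gamma_{P,k}(G-v)=a-k-1$ for every vertex $v$ of $G$.
   Context: $K_a$ is the complete graph on $a$ vertices, $\square$ denotes the Cartesian product of graphs, and $G-v$ is obtained by deleting $v$ and its incident edges. $N_G[v]$ is the closed neighbourhood of $v$, and $N_G[S]$ the union of closed neighbourhoods of vertices of $S$. For $S\subseteq V(G)$, define $\mathcal{P}^{0}_{G,k}(S)=N_G[S]$ and $\mathcal{P}^{i+1}_{G,k}(S)=\bigcup\{N_G[v] : v\in \mathcal{P}^{i}_{G,k}(S),\ |N_G[v]\setminus \mathcal{P}^{i}_{G,k}(S)|\le k\}$; these increase and stabilize to $\mathcal{P}^{\infty}_{G,k}(S)$. $S$ is a $k$-power dominating set if $\mathcal{P}^{\infty}_{G,k}(S)=V(G)$; $\gamma_{P,k}(G)$ is the minimum size of such a set. *)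

(* Defs.v *)
From mathcomp Require Import all_boot.
Set Implicit Arguments. Unset Strict Implicit. Unset Printing Implicit Defensive.

Section PowerDom.
Variables (T : finType) (e : rel T).

Definition cnbhd (v : T) : {set T} := [set u | (u == v) || e v u].

Definition cnbhdS (S : {set T}) : {set T} := \bigcup_(v in S) cnbhd v.

Definition pd_step (k : nat) (P : {set T}) : {set T} :=
  \bigcup_(v in P | #|cnbhd v :\: P| <= k) cnbhd v.

Definition pd_iter (k : nat) (S : {set T}) (i : nat) : {set T} :=
  iter i (pd_step k) (cnbhdS S).

(* S is k-power dominating: P^infty(S) = V(G); since the P^i increase and
   stabilise, this means some P^i is the whole vertex set. *)
Definition k_power_dominating (k : nat) (S : {set T}) : Prop :=
  exists i, pd_iter k S i = [set: T].

Definition gammaPk_is (k n : nat) : Prop :=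
  (exists S : {set T}, k_power_dominating k S /\ #|S| = n) /\
  (forall S : {set T}, k_power_dominating k S -> n <= #|S|).
End PowerDom.

Definition rook_adj (a : nat) : rel ('I_a * 'I_a) :=
  fun x y => ((x.1 == y.1) && (x.2 != y.2)) || ((x.2 == y.2) && (x.1 != y.1)).

(* G - v : induced subgraph on the vertex type {x | x != v} *)
Definition del_vertex_adj (T : finType) (e : rel T) (v : T)
  : rel {x : T | x != v} := fun x y => e (val x) (val y).
Arguments del_vertex_adj {T} e v.

(* Main.v *)
Require Import Defs.
From mathcomp Require Import all_boot zify.
Set Implicit Arguments. Unset Strict Implicit. Unset Printing Implicit Defensive.

Section Rook.
Variables (a : nat) (v : 'I_a * 'I_a).
Local Notation T := {x : 'I_a * 'I_a | x != v}.
Local Notation e := (del_vertex_adj (@rook_adj a) v).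

Definition cross (R C : {set 'I_a}) : {set T} :=
  [set x : T | ((val x).1 \in R) || ((val x).2 \in C)].

Lemma in_cnbhd (u w : T) :
  (w \in cnbhd e u) = (w == u) || rook_adj (val u) (val w).
Proof. by rewrite inE. Qed.

Lemma same_row (x u : T) : (val u).1 = (val x).1 -> x \in cnbhd e u.
Proof.
case: x => [[x1 x2] hx]; case: u => [[u1 u2] hu] /= H1.
rewrite in_cnbhd /rook_adj /=.
case: (eqVneq u2 x2) => H2.
  by apply/orP; left; apply/eqP; apply: val_inj => /=; congruence.
by apply/orP; right; rewrite H1 eqxx /= ?H2 ?orbT.
Qed.

Lemma same_col (x u : T) : (val u).2 = (val x).2 -> x \in cnbhd e u.
Proof.
case: x => [[x1 x2] hx]; case: u => [[u1 u2] hu] /= H1.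
rewrite in_cnbhd /rook_adj /=.
case: (eqVneq u1 x1) => H2.
  by apply/orP; left; apply/eqP; apply: val_inj => /=; congruence.
by apply/orP; right; rewrite H1 eqxx /= ?H2 ?orbT.
Qed.

Lemma Zsub (R C : {set 'I_a}) (u : T) : (val u).1 \in R -> (val u).2 \in C ->
  cnbhd e u \subset cross R C.
Proof.
move=> h1 h2; apply/subsetP=> w; rewrite in_cnbhd inE /rook_adj.
by case/orP=> [/eqP->|/orP[/andP[/eqP<- _]|/andP[/eqP<- _]]];
  rewrite ?h1 ?h2 ?orbT.
Qed.

Lemma Zcard (R C : {set 'I_a}) (u : T) : (val u).1 \in R -> (val u).2 \in C ->
  #|cnbhd e u :\: cross R C| = 0.
Proof.
move=> h1 h2; have: cnbhd e u :\: cross R C = set0.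
  by apply/eqP; rewrite setD_eq0 Zsub.
by move->; rewrite cards0.
Qed.

Lemma Dfacts (R C : {set 'I_a}) (u w : T) : (val u).1 \in R ->
  w \in cnbhd e u :\: cross R C ->
  (val w).2 = (val u).2 /\ (val w).1 \notin R /\ (val w).2 \notin C.
Proof.
move=> h1; rewrite !inE negb_or /rook_adj => /andP[/andP[n1 n2]].
case/orP=> [/eqP Hw|/orP[/andP[/eqP E1 _]|/andP[/eqP E2 _]]].
- by rewrite Hw h1 in n1.
- by rewrite -E1 h1 in n1.
- by [].
Qed.

Lemma Ecard (R C : {set 'I_a}) (u : T) : (val u).1 \in R -> (val u).2 \notin C ->
  #|cnbhd e u :\: cross R C| = #|[set i | (i \notin R) && ((i, (val u).2) != v)]|.
Proof.
move=> h1 h2.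
have inj : {in cnbhd e u :\: cross R C &, injective (fun w : T => (val w).1)}.
  move=> w1 w2 H1 H2 Heq.
  have [E1 _] := Dfacts h1 H1; have [E2 _] := Dfacts h1 H2.
  apply: val_inj; move: Heq E1 E2; case: (val w1) => x1 y1; case: (val w2) => x2 y2 /=.
  by move=> -> -> ->.
rewrite -(card_in_imset inj); apply: eq_card => i; rewrite inE.
apply/imsetP/andP.
- case=> w Hw ->; have [E1 [E2 _]] := Dfacts h1 Hw; split=> //.
  by rewrite -E1 -surjective_pairing; exact: (valP w).
- case=> Hi Hv; exists (exist (fun x => x != v) (i, (val u).2) Hv) => //.
  rewrite !inE /= negb_or Hi h2 /=.
  apply/orP; right; rewrite /del_vertex_adj /rook_adj /= eqxx /=.
  apply/orP; right; apply: contraNneq Hi => <-; exact: h1.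
Qed.

Lemma Dfacts' (R C : {set 'I_a}) (u w : T) : (val u).2 \in C ->
  w \in cnbhd e u :\: cross R C ->
  (val w).1 = (val u).1 /\ (val w).2 \notin C /\ (val w).1 \notin R.
Proof.
move=> h1; rewrite !inE negb_or /rook_adj => /andP[/andP[n1 n2]].
case/orP=> [/eqP Hw|/orP[/andP[/eqP E1 _]|/andP[/eqP E2 _]]].
- by rewrite Hw h1 in n2.
- by [].
- by rewrite -E2 h1 in n2.
Qed.

Lemma Ecard' (R C : {set 'I_a}) (u : T) : (val u).2 \in C -> (val u).1 \notin R ->
  #|cnbhd e u :\: cross R C| = #|[set j | (j \notin C) && (((val u).1, j) != v)]|.
Proof.
move=> h1 h2.
have inj : {in cnbhd e u :\: cross R C &, injective (fun w : T => (val w).2)}.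
  move=> w1 w2 H1 H2 Heq.
  have [E1 _] := Dfacts' h1 H1; have [E2 _] := Dfacts' h1 H2.
  apply: val_inj; move: Heq E1 E2; case: (val w1) => x1 y1; case: (val w2) => x2 y2 /=.
  by move=> -> -> ->.
rewrite -(card_in_imset inj); apply: eq_card => i; rewrite inE.
apply/imsetP/andP.
- case=> w Hw ->; have [E1 [E2 _]] := Dfacts' h1 Hw; split=> //.
  by rewrite -E1 -surjective_pairing; exact: (valP w).
- case=> Hi Hv; exists (exist (fun x => x != v) ((val u).1, i) Hv) => //.
  rewrite !inE /= negb_or Hi h2 /=.
  apply/orP; right; rewrite /del_vertex_adj /rook_adj /= eqxx /=.
  apply/orP; left; apply: contraNneq Hi => <-; exact: h1.
Qed.

Lemma cnbhdS_cross (S : {set T}) :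
  cnbhdS e S = cross [set (val s).1 | s in S] [set (val s).2 | s in S].
Proof.
apply/setP => x; rewrite inE; apply/bigcupP/orP.
- case=> s Hs; rewrite in_cnbhd /rook_adj.
  case/orP=> [/eqP->|/orP[/andP[/eqP E1 _]|/andP[/eqP E2 _]]].
  + by left; apply: imset_f.
  + by left; apply/imsetP; exists s.
  + by right; apply/imsetP; exists s.
- case=> /imsetP[s Hs E].
  + exists s; first exact: Hs. exact: same_row (esym E).
  + exists s; first exact: Hs. exact: same_col (esym E).
Qed.

Lemma step_in k (Q P : {set T}) (x u : T) : Q \subset P -> u \in Q ->
  #|cnbhd e u :\: Q| <= k -> x \in cnbhd e u -> x \in pd_step e k P.
Proof.
move=> QP uQ Hk Hx; apply/bigcupP; exists u => //.
rewrite (subsetP QP) //=; apply: leq_trans Hk; apply: subset_leq_card.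
exact: setDS.
Qed.

End Rook.
Definition sh (r t : nat) := if t < r then t else t.+1.
Lemma sh_lt m a r (t : 'I_m) : m < a -> sh r t < a.
Proof. move=> H; have := ltn_ord t; rewrite /sh; case: ifP => ?; lia. Qed.
Lemma sh_neq r t : sh r t != r.
Proof. rewrite /sh; case: ifP => ?; lia. Qed.
Lemma sh_inj r : injective (sh r).
Proof. move=> x y; rewrite /sh; do 2 case: ifP => ?; lia. Qed.

Lemma rowset_bound a (v : 'I_a * 'I_a) (C : {set 'I_a}) :
  v.2 \notin C -> #|[set j | (j \notin C) && ((v.1, j) != v)]| <= #|~: C| - 1.
Proof.
move=> Hc.
have -> : #|~: C| = 1 + #|~: C :\ v.2| by rewrite (cardsD1 v.2) inE Hc.
rewrite addKn; apply: subset_leq_card; apply/subsetP => j; rewrite !inE.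
case/andP=> -> H; rewrite andbT; apply: contraNneq H => ->.
by rewrite -surjective_pairing.
Qed.

Lemma colset_bound a (v : 'I_a * 'I_a) (R : {set 'I_a}) :
  v.1 \notin R -> #|[set i | (i \notin R) && ((i, v.2) != v)]| <= #|~: R| - 1.
Proof.
move=> Hc.
have -> : #|~: R| = 1 + #|~: R :\ v.1| by rewrite (cardsD1 v.1) inE Hc.
rewrite addKn; apply: subset_leq_card; apply/subsetP => j; rewrite !inE.
case/andP=> -> H; rewrite andbT; apply: contraNneq H => ->.
by rewrite -surjective_pairing.
Qed.

Lemma colset_lower a (v : 'I_a * 'I_a) (R : {set 'I_a}) j :
  #|~: R| - 1 <= #|[set i | (i \notin R) && ((i, j) != v)]|.
Proof.
apply: (@leq_trans #|~: R :\ v.1|).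
  by rewrite (cardsD1 v.1 (~: R)); case: (_ \in _) => /=; rewrite ?subn1 ?add0n ?add1n //= ?leq_pred.
  apply: subset_leq_card; apply/subsetP => i; rewrite !inE.
  case/andP=> H ->; apply: contra H => /eqP <-; exact: eqxx.
Qed.

Lemma rowset_lower a (v : 'I_a * 'I_a) (C : {set 'I_a}) i :
  #|~: C| - 1 <= #|[set j | (j \notin C) && ((i, j) != v)]|.
Proof.
apply: (@leq_trans #|~: C :\ v.2|).
  by rewrite (cardsD1 v.2 (~: C)); case: (_ \in _) => /=; rewrite ?subn1 ?add0n ?add1n //= ?leq_pred.
  apply: subset_leq_card; apply/subsetP => j; rewrite !inE.
  case/andP=> H ->; apply: contra H => /eqP <-; exact: eqxx.
Qed.

Lemma cardC a (A : {set 'I_a}) : #|~: A| = a - #|A|.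
Proof. have := cardsC A; rewrite card_ord; lia. Qed.

Unset Implicit Arguments.
Theorem mainTheorem6 (k a : nat) (hk : 0 < k) (ha : k + 2 <= a)
  (v : 'I_a * 'I_a) :
  gammaPk_is (del_vertex_adj (@rook_adj a) v) k (a - k - 1).
Proof.
split.
- set m := a - k - 1.
  have Hm : m < a by rewrite /m; lia.
  pose f (t : 'I_m) : 'I_a := Ordinal (sh_lt v.1 t Hm).
  pose g (t : 'I_m) : 'I_a := Ordinal (sh_lt v.2 t Hm).
  have hvn : forall t, (f t, g t) != v.
    move=> t; apply/negP => /eqP H1.
    have H2 := congr1 (fun p => nat_of_ord p.1) H1; simpl in H2.
    by move: (sh_neq v.1 t); rewrite H2 eqxx.
  pose h (t : 'I_m) : {x : 'I_a * 'I_a | x != v} :=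
    exist (fun x => x != v) (f t, g t) (hvn t).
  pose S := [set h t | t : 'I_m].
  exists S; split; last first.
    rewrite card_imset ?card_ord //.
    move=> t1 t2 /(congr1 (fun x => nat_of_ord (val x).1)) /= /sh_inj H.
    exact: val_inj.
  set R := [set (val s).1 | s in S]; set C := [set (val s).2 | s in S].
  have HR : #|R| = m.
    rewrite /R /S -imset_comp card_imset ?card_ord //.
    move=> t1 t2 /(congr1 (@nat_of_ord a)) /= /sh_inj H; exact: val_inj.
  have HC : #|C| = m.
    rewrite /C /S -imset_comp card_imset ?card_ord //.
    move=> t1 t2 /(congr1 (@nat_of_ord a)) /= /sh_inj H; exact: val_inj.
  have nR : v.1 \notin R.
    apply/imsetP => -[s /imsetP[t _ ->] /(congr1 (@nat_of_ord a)) /= H].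
    by move: (sh_neq v.1 t); rewrite -H eqxx.
  have nC : v.2 \notin C.
    apply/imsetP => -[s /imsetP[t _ ->] /(congr1 (@nat_of_ord a)) /= H].
    by move: (sh_neq v.2 t); rewrite -H eqxx.
  have /set0Pn[r0 Hr0] : R != set0 by rewrite -card_gt0 HR /m; lia.
  have /set0Pn[c0 Hc0] : C != set0 by rewrite -card_gt0 HC /m; lia.
  set R' := v.1 |: R; set C' := v.2 |: C.
  have HR' : #|~: R'| = k by rewrite cardC cardsU1 nR HR /m /=; lia.
  have HC' : #|~: C'| = k by rewrite cardC cardsU1 nC HC /m /=; lia.
  have stepA : cross v R' C' \subset pd_step (del_vertex_adj (@rook_adj a) v) k
                 (cnbhdS (del_vertex_adj (@rook_adj a) v) S).
    rewrite cnbhdS_cross -/R -/C; apply/subsetP => x; rewrite inE !in_setU1.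
    case/orP => [Hx1 | Hx2].
    + have hu : ((val x).1, c0) != v.
        by apply/negP => /eqP Hv; move: nC; rewrite -Hv /= => /negP; apply.
      pose u := exist (fun y => y != v) ((val x).1, c0) hu.
      apply: (@step_in a v k (cross v R C) (cross v R C) x u (subxx _)).
      * by rewrite inE; apply/orP; right.
      * case/orP: Hx1 => [/eqP Hx1 | Hx1].
        - rewrite (Ecard' (u:=u)) /= ?Hx1 //.
          apply: leq_trans (rowset_bound nC) _; rewrite cardC HC /m; lia.
        - by rewrite Zcard.
      * exact: same_row.
    + have hu : (r0, (val x).2) != v.
        by apply/negP => /eqP Hv; move: nR; rewrite -Hv /= => /negP; apply.
      pose u := exist (fun y => y != v) (r0, (val x).2) hu.
      apply: (@step_in a v k (cross v R C) (cross v R C) x u (subxx _)).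
      * by rewrite inE; apply/orP; left.
      * case/orP: Hx2 => [/eqP Hx2 | Hx2].
        - rewrite (Ecard (u:=u)) /= ?Hx2 //.
          apply: leq_trans (colset_bound nR) _; rewrite cardC HR /m; lia.
        - by rewrite Zcard.
      * exact: same_col.
  have c0C' : c0 \in C' by rewrite in_setU1; apply/orP; right.
  exists 2; rewrite /pd_iter /=.
  apply/eqP; rewrite eqEsubset subsetT /=; apply/subsetP => x _.
  case: (boolP ((val x).1 \in R')) => Hx1.
  + have hu : ((val x).1, c0) != v.
      by apply/negP => /eqP Hv; move: nC; rewrite -Hv /= => /negP; apply.
    pose u := exist (fun y => y != v) ((val x).1, c0) hu.
    apply: (@step_in a v k (cross v R' C') _ x u stepA).
    * by rewrite inE; apply/orP; right.
    * by rewrite Zcard.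
    * exact: same_row.
  + have hu : (r0, (val x).2) != v.
      by apply/negP => /eqP Hv; move: nR; rewrite -Hv /= => /negP; apply.
    pose u := exist (fun y => y != v) (r0, (val x).2) hu.
    have r0R' : r0 \in R' by rewrite in_setU1; apply/orP; right.
    apply: (@step_in a v k (cross v R' C') _ x u stepA).
    * by rewrite inE; apply/orP; left.
    * case: (boolP ((val x).2 \in C')) => Hx2.
      - by rewrite Zcard.
      - rewrite (Ecard (u:=u)) //= -HR'.
        by apply: subset_leq_card; apply/subsetP => i; rewrite !inE => /andP[].
    * apply: same_col => //.
- move=> S [i Hi]; rewrite leqNgt; apply/negP => HS.
  set R := [set (val s).1 | s in S]; set C := [set (val s).2 | s in S].
  have HR : #|R| <= #|S| := leq_imset_card _ _.
  have HC : #|C| <= #|S| := leq_imset_card _ _.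
  have L2 : forall r, r < a - k - 1 -> k + 2 <= a - r by move=> r; lia.
  have HRa : k + 2 <= #|~: R| by rewrite cardC; exact: (L2 _ (leq_ltn_trans HR HS)).
  have HCa : k + 2 <= #|~: C| by rewrite cardC; exact: (L2 _ (leq_ltn_trans HC HS)).
  have L : forall r, r < a - k - 1 -> k < a - r - 1 by move=> r; lia.
  have inv : forall n, pd_iter (del_vertex_adj (@rook_adj a) v) k S n \subset cross v R C.
    elim=> [|n IH]; first by rewrite /pd_iter /= cnbhdS_cross.
    change (pd_step (del_vertex_adj (@rook_adj a) v) k
             (pd_iter (del_vertex_adj (@rook_adj a) v) k S n) \subset cross v R C).
    apply/subsetP => x /bigcupP[u /andP[uX Hk] Hx].
    have := subsetP IH u uX.
    have Hsub : #|cnbhd (del_vertex_adj (@rook_adj a) v) u :\: cross v R C| <= k.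
      exact: leq_trans (subset_leq_card (setDS _ IH)) Hk.
    rewrite inE.
    case: (boolP ((val u).1 \in R)) => h1; case: (boolP ((val u).2 \in C)) => h2 //= _.
    + exact: (subsetP (Zsub h1 h2)).
    + exfalso; rewrite (Ecard h1 h2) in Hsub.
      have := colset_lower v R (val u).2; rewrite cardC => /leq_trans /(_ Hsub) H.
      by have := leq_trans (L _ (leq_ltn_trans HR HS)) H; rewrite ltnn.
    + exfalso; rewrite (Ecard' h2 h1) in Hsub.
      have := rowset_lower v C (val u).1; rewrite cardC => /leq_trans /(_ Hsub) H.
      by have := leq_trans (L _ (leq_ltn_trans HC HS)) H; rewrite ltnn.
  have [x Hx] : exists x : {x : 'I_a * 'I_a | x != v}, x \notin cross v R C.
    have /set0Pn[i0 Hi0] : (~: R :\ v.1) != set0.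
      rewrite -card_gt0; have := cardsD1 v.1 (~: R); move: HRa.
      case: (_ \in _) => /=; lia.
    have /set0Pn[j0 Hj0] : (~: C) != set0.
      by rewrite -card_gt0; apply: leq_trans HCa; lia.
    have hv : (i0, j0) != v.
      by apply/negP => /eqP Hv; move: Hi0; rewrite -Hv !inE eqxx.
    exists (exist _ (i0, j0) hv); rewrite inE /= negb_or.
    by move: Hi0 Hj0; rewrite !inE => /andP[_ ->] ->.
  have := subsetP (inv i) x; rewrite Hi in_setT => /(_ isT).
  by rewrite (negbTE Hx).
Qed.
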